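(* Let $u:\Sigma\to M$ be a smooth $(j,J)$-holomorphic map and $z_0\in\Sigma$ with $j^ku(z_0)=0$. Then $j^{k+1}u(z_0)=0$ if and only if $\sigma^{k+1}(J,(j,u),z_0)=0$.
   Context: $(M,J)$ almost complex of real dimension $2n$, $(\Sigma,j)$ a Riemann surface; $u$ is $(j,J)$-holomorphic if $J\circ du=du\circ j$. $j^ku(z)=0$ means all derivatives of $u$ of orders $1,\dots,k$ vanish at $z$; then $d^{k+1}u(z)$ is a well-defined symmetric $(k+1)$-linear map $T_z\Sigma\to T_{u(z)}M$. The space of symmetric $\ell$-linear maps $T_z\Sigma\to T_xM$ splits relative to $(j_z,J_x)$ into the holomorphic part $H^{(\ell,0)}_{(z,x)}$ (complex multilinear maps), the antiholomorphic part and mixed parts; $\pi^{hol}$ is the projection to $H^{(\ell,0)}$. The principal holomorphic jet is $\sigma^{k+1}(J,(j,u),z_0):=\pi^{hol}(d^{k+1}u(z_0))$. *)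

(* Defs.v *)
From Stdlib Require Import Reals ClassicalEpsilon.
From mathcomp Require Import all_boot.
Set Implicit Arguments. Unset Strict Implicit.

Local Open Scope R_scope.

Definition pt (m : nat) := 'I_m -> R.
Definition mat (m : nat) := 'I_m -> 'I_m -> R.

Definition sumI m (f : 'I_m -> R) : R := foldr Rplus 0 (map f (enum 'I_m)).
Definition matvec m (A : mat m) (x : pt m) : pt m :=
  fun a => sumI (fun b => A a b * x b).
Definition matmul m (A B : mat m) : mat m :=
  fun a c => sumI (fun b => A a b * B b c).
Definition zero_pt m : pt m := fun _ => 0.

Definition is_cplx_str m (A : mat m) : Prop :=
  forall a c, matmul A A a c = if a == c then -1 else 0.

Definition upd m (x : pt m) (i : 'I_m) (h : R) : pt m :=
  fun k => if k == i then x k + h else x k.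
(* the derivative at 0 of g (when it exists; junk otherwise) *)
Definition D0 (g : R -> R) : R :=
  epsilon (inhabits 0) (fun l => derivable_pt_lim g 0 l).
Definition partial m (i : 'I_m) (f : pt m -> R) : pt m -> R :=
  fun x => D0 (fun h => f (upd x i h)).
Fixpoint iter_partial m (ds : seq 'I_m) (f : pt m -> R) : pt m -> R :=
  match ds with [::] => f | i :: ds' => partial i (iter_partial ds' f) end.

Definition cont_at m (f : pt m -> R) (x : pt m) : Prop :=
  forall eps, 0 < eps -> exists delta, 0 < delta /\
    forall y, (forall i, Rabs (y i - x i) < delta) -> Rabs (f y - f x) < eps.
Definition is_open m (V : pt m -> Prop) : Prop :=
  forall x, V x -> exists delta, 0 < delta /\
    forall y, (forall i, Rabs (y i - x i) < delta) -> V y.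

Definition smooth_on m (V : pt m -> Prop) (f : pt m -> R) : Prop :=
  forall (ds : seq 'I_m) x, V x ->
    cont_at (iter_partial ds f) x /\
    forall i, exists l, derivable_pt_lim (fun h => iter_partial ds f (upd x i h)) 0 l.
Definition smooth_vec m p (V : pt m -> Prop) (f : pt m -> pt p) : Prop :=
  forall a, smooth_on V (fun x => f x a).
Definition smooth_mat m p (V : pt m -> Prop) (A : pt m -> mat p) : Prop :=
  forall a b, smooth_on V (fun x => A x a b).

Definition vpartial m p (i : 'I_m) (f : pt m -> pt p) : pt m -> pt p :=
  fun x a => partial i (fun y => f y a) x.
Fixpoint iter_vpartial m p (ds : seq 'I_m) (f : pt m -> pt p) : pt m -> pt p :=
  match ds with [::] => f | i :: ds' => vpartial i (iter_vpartial ds' f) end.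

Definition du m p (f : pt m -> pt p) (z : pt m) (v : pt m) : pt p :=
  fun a => sumI (fun c => v c * vpartial c f z a).

(* d^l f(z)(v_1,...,v_l) as a function of the list [:: v_1; ...; v_l] *)
Fixpoint dmult m p (f : pt m -> pt p) (vs : seq (pt m)) (z : pt m) : pt p :=
  match vs with
  | [::] => f z
  | v :: vs' => fun a => sumI (fun c => v c * dmult (vpartial c f) vs' z a)
  end.

Definition jet_vanish m p (f : pt m -> pt p) (z : pt m) (k : nat) : Prop :=
  forall ds : seq 'I_m, (0 < size ds <= k)%N -> iter_vpartial ds f z = @zero_pt p.

(* Projection to the part that is complex linear in slot i, relative to
   (j0, J0):  A |-> (A - J0 o A o (j0 in slot i)) / 2. *)
Definition slot_proj m p (j0 : mat m) (J0 : mat p) (i : nat)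
  (A : seq (pt m) -> pt p) : seq (pt m) -> pt p :=
  fun vs a => / 2 * (A vs a - matvec J0
     (A (set_nth (@zero_pt m) vs i (matvec j0 (nth (@zero_pt m) vs i)))) a).

(* pi^hol on l-linear maps: composite of the (commuting) slot projections;
   its image is exactly H^(l,0), the complex l-linear maps. *)
Fixpoint hol_part m p (j0 : mat m) (J0 : mat p) (l : nat)
  (A : seq (pt m) -> pt p) : seq (pt m) -> pt p :=
  match l with
  | 0 => A
  | l'.+1 => slot_proj j0 J0 l' (hol_part j0 J0 l' A)
  end.

Definition sigma_jet m p (J : pt p -> mat p) (j : pt m -> mat m)
  (u : pt m -> pt p) (z0 : pt m) (l : nat) : seq (pt m) -> pt p :=
  hol_part (j z0) (J (u z0)) l (fun vs => dmult u vs z0).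

(* Main.v *)
Require Import Defs.
From Stdlib Require Import Reals Lra ClassicalEpsilon FunctionalExtensionality PropExtensionality.
From mathcomp Require Import all_boot.
Set Implicit Arguments. Unset Strict Implicit.
Local Open Scope R_scope.

Lemma upd0 m (x : pt m) i : upd x i 0 = x.
Proof. apply: functional_extensionality => k; rewrite /upd; case: (k == i) => //; ring. Qed.

Lemma upd_upd m (x : pt m) i t s : upd (upd x i t) i s = upd x i (t + s).
Proof. apply: functional_extensionality => k; rewrite /upd; case: (k == i) => //; ring. Qed.

Lemma upd_comm m (x : pt m) i j t s : i != j ->
  upd (upd x i t) j s = upd (upd x j s) i t.
Proof.
move=> ij; apply: functional_extensionality => k; rewrite /upd.
case Hki: (k == i); case Hkj: (k == j) => //; ring.
Qed.

Lemma D0_spec g l : derivable_pt_lim g 0 l -> D0 g = l.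
Proof.
move=> H; rewrite /D0.
have := epsilon_spec (inhabits 0) (fun l => derivable_pt_lim g 0 l) (ex_intro _ l H).
move=> H2; exact: (uniqueness_limite _ _ _ _ H2 H).
Qed.

Definition near0 (P : R -> Prop) := exists d, 0 < d /\ forall h, Rabs h < d -> P h.

Lemma dpl_local g1 g2 l : near0 (fun h => g1 h = g2 h) ->
  derivable_pt_lim g1 0 l -> derivable_pt_lim g2 0 l.
Proof.
move=> [d [d0 Hd]] H eps He.
have [del Hdel] := H eps He.
have hp : 0 < Rmin d del by apply: Rmin_pos => //; exact: cond_pos.
exists (mkposreal _ hp) => h hn hl /=.
move: hl => /= hl.
have h1 : Rabs h < d by apply: Rlt_le_trans hl (Rmin_l _ _).
have h2 : Rabs h < del by apply: Rlt_le_trans hl (Rmin_r _ _).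
rewrite -(Hd (0 + h)); last by rewrite Rplus_0_l.
rewrite -(Hd 0); last by rewrite Rabs_R0.
exact: Hdel.
Qed.

Lemma near0_sym (P Q : R -> R) : near0 (fun h => P h = Q h) -> near0 (fun h => Q h = P h).
Proof. by move=> [d [d0 H]]; exists d; split => // h /H. Qed.

Lemma D0_local g1 g2 : near0 (fun h => g1 h = g2 h) -> D0 g1 = D0 g2.
Proof.
move=> H; rewrite /D0.
have -> : (fun l => derivable_pt_lim g1 0 l) = (fun l => derivable_pt_lim g2 0 l) => //.
apply: functional_extensionality => l; apply: propositional_extensionality; split.
- exact: dpl_local.
- by apply: dpl_local; apply: near0_sym.
Qed.

Lemma open_upd m (D : pt m -> Prop) x i : is_open D -> D x ->
  near0 (fun h => D (upd x i h)).
Proof.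
move=> oD Dx; have [d [d0 Hd]] := oD x Dx; exists d; split => // h hh.
apply: Hd => k; rewrite /upd; case: (k == i).
- by rewrite /Rminus Rplus_comm -Rplus_assoc Rplus_opp_l Rplus_0_l.
- by rewrite Rminus_diag Rabs_R0.
Qed.

Lemma partial_local m (D : pt m -> Prop) (f g : pt m -> R) i x :
  is_open D -> D x -> (forall y, D y -> f y = g y) -> partial i f x = partial i g x.
Proof.
move=> oD Dx Hfg; rewrite /partial; apply: D0_local.
have [d [d0 Hd]] := open_upd i oD Dx; exists d; split => // h /Hd; exact: Hfg.
Qed.

Lemma iter_local m (D : pt m -> Prop) (f g : pt m -> R) ds :
  is_open D -> (forall y, D y -> f y = g y) ->
  forall x, D x -> iter_partial ds f x = iter_partial ds g x.
Proof.
move=> oD Hfg; elim: ds => [|i ds IH] x Dx /=; first exact: Hfg.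
by apply: (@partial_local _ D) => // y Dy; apply: IH.
Qed.

Lemma iter_cat m (ds es : seq 'I_m) f :
  iter_partial (ds ++ es) f = iter_partial ds (iter_partial es f).
Proof. by elim: ds => //= i ds ->. Qed.

Lemma iter_vpartialE m p (ds : seq 'I_m) (f : pt m -> pt p) a :
  (fun y => iter_vpartial ds f y a) = iter_partial ds (fun y => f y a).
Proof.
elim: ds => //= i ds IH; apply: functional_extensionality => y.
by rewrite /vpartial IH.
Qed.

Definition sumS (T : Type) (s : seq T) (f : T -> R) : R := foldr Rplus 0 (map f s).

Lemma sumS_cons T x (s : seq T) f : sumS (x :: s) f = f x + sumS s f.
Proof. by []. Qed.
Lemma sumS_nil T (f : T -> R) : sumS [::] f = 0.
Proof. by []. Qed.

Lemma sumIE m (f : 'I_m -> R) : sumI f = sumS (enum 'I_m) f.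
Proof. by []. Qed.

Lemma sumS_ext T (s : seq T) f g : (forall x, f x = g x) -> sumS s f = sumS s g.
Proof. by move=> H; elim: s => // x s IH; rewrite !sumS_cons IH H. Qed.

Lemma sumS_add T (s : seq T) f g :
  sumS s (fun x => f x + g x) = sumS s f + sumS s g.
Proof. elim: s => [|x s IH]; rewrite ?sumS_nil ?sumS_cons ?IH; ring. Qed.

Lemma sumS_opp T (s : seq T) f :
  sumS s (fun x => - f x) = - sumS s f.
Proof. elim: s => [|x s IH]; rewrite ?sumS_nil ?sumS_cons ?IH; ring. Qed.

Lemma sumS_sub T (s : seq T) f g :
  sumS s (fun x => f x - g x) = sumS s f - sumS s g.
Proof. elim: s => [|x s IH]; rewrite ?sumS_nil ?sumS_cons ?IH; ring. Qed.

Lemma sumS_scal T (s : seq T) c f :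
  sumS s (fun x => c * f x) = c * sumS s f.
Proof. elim: s => [|x s IH]; rewrite ?sumS_nil ?sumS_cons ?IH; ring. Qed.

Lemma sumS_scalr T (s : seq T) c f :
  sumS s (fun x => f x * c) = sumS s f * c.
Proof. elim: s => [|x s IH]; rewrite ?sumS_nil ?sumS_cons ?IH; ring. Qed.

Lemma sumS_0 T (s : seq T) : sumS s (fun _ => 0) = 0.
Proof. elim: s => [|x s IH]; rewrite ?sumS_nil ?sumS_cons ?IH; ring. Qed.

Lemma sumS_swap T U (s : seq T) (t : seq U) F :
  sumS s (fun a => sumS t (fun b => F a b)) = sumS t (fun b => sumS s (fun a => F a b)).
Proof.
elim: s => [|x s IH]; rewrite ?sumS_nil ?sumS_cons ?IH; first by rewrite sumS_0.
by rewrite -sumS_add.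
Qed.

Lemma sumS_delta0 (T : eqType) (s : seq T) d (X : T -> R) : d \notin s ->
  sumS s (fun c => if c == d then X c else 0) = 0.
Proof.
elim: s => //= x s IH; rewrite in_cons negb_or => /andP [dx ds].
rewrite sumS_cons IH // eq_sym (negbTE dx); ring.
Qed.

Lemma sumS_delta (T : eqType) (s : seq T) d (X : T -> R) : uniq s -> d \in s ->
  sumS s (fun c => if c == d then X c else 0) = X d.
Proof.
elim: s => //= x s IH /andP [xs us]; rewrite in_cons sumS_cons; case: (eqVneq d x) => [->|dx] /=.
- by move=> _; rewrite sumS_delta0 // Rplus_0_r.
- move=> ds; rewrite IH //; ring.
Qed.

Lemma sumI_delta m d (X : 'I_m -> R) :
  sumI (fun c => if c == d then X c else 0) = X d.
Proof. by rewrite sumIE sumS_delta ?enum_uniq ?mem_enum. Qed.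

Lemma sumI_delta1 m d (X : 'I_m -> R) :
  sumI (fun c => (if c == d then 1 else 0) * X c) = X d.
Proof.
rewrite -(sumI_delta d X) !sumIE; apply: sumS_ext => c.
case: (c == d); ring.
Qed.

Lemma finite_min m (P : 'I_m -> R -> Prop) :
  (forall b d d', 0 < d' <= d -> P b d -> P b d') ->
  (forall b, exists d, 0 < d /\ P b d) -> exists d, 0 < d /\ forall b, P b d.
Proof.
move=> mono H.
suff: forall s : seq 'I_m, exists d, 0 < d /\ forall b, b \in s -> P b d.
  by move=> /(_ (enum 'I_m)) [d [d0 Hd]]; exists d; split => // b; apply: Hd; rewrite mem_enum.
elim => [|x s [d [d0 Hd]]]; first by exists 1; split => //; lra.
have [e [e0 He]] := H x.
exists (Rmin d e); split; first by apply: Rmin_pos.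
move=> b; rewrite in_cons => /orP [/eqP ->|bs].
- apply: (mono _ e) => //; split; [by apply: Rmin_pos|exact: Rmin_r].
- apply: (mono _ d); last exact: Hd.
  split; [by apply: Rmin_pos|exact: Rmin_l].
Qed.

Definition tends0 (F : R -> R) := forall eps, 0 < eps -> exists d, 0 < d /\
  forall h, h <> 0 -> Rabs h < d -> Rabs (F h) < eps.

Lemma tends0_add F G : tends0 F -> tends0 G -> tends0 (fun h => F h + G h).
Proof.
move=> HF HG eps e0.
have e2 : 0 < eps / 2 by lra.
have [d1 [d10 H1]] := HF _ e2; have [d2 [d20 H2]] := HG _ e2.
exists (Rmin d1 d2); split; first exact: Rmin_pos.
move=> h hn hl.
have := H1 h hn (Rlt_le_trans _ _ _ hl (Rmin_l _ _)).
have := H2 h hn (Rlt_le_trans _ _ _ hl (Rmin_r _ _)).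
move: (Rabs_triang (F h) (G h)); lra.
Qed.

Lemma tends0_sumS T (s : seq T) (F : T -> R -> R) :
  (forall a, tends0 (F a)) -> tends0 (fun h => sumS s (fun a => F a h)).
Proof.
move=> H; elim: s => [|x s IH].
- by move=> eps e0; exists 1; split => [|h _ _]; [lra|rewrite Rabs_R0].
- rewrite /=; exact: tends0_add.
Qed.

Lemma dpl_tends0 g l : derivable_pt_lim g 0 l <->
  tends0 (fun h => (g h - g 0) / h - l).
Proof.
split.
- move=> H eps e0; have [d Hd] := H eps e0; exists d; split; first exact: cond_pos.
  move=> h hn hl; have := Hd h hn hl; by rewrite Rplus_0_l.
- move=> H eps e0; have [d [d0 Hd]] := H eps e0; exists (mkposreal _ d0) => h hn hl.
  rewrite Rplus_0_l; exact: Hd.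
Qed.

Lemma dpl_shift g t l : derivable_pt_lim (fun h => g (t + h)) 0 l -> derivable_pt_lim g t l.
Proof.
move=> H eps e0; have [d Hd] := H eps e0; exists d => h hn hl.
have := Hd h hn hl; by rewrite Rplus_0_l Rplus_0_r.
Qed.

Lemma mvt_any F F' a b :
  (forall c, Rmin a b <= c <= Rmax a b -> derivable_pt_lim F c (F' c)) ->
  exists c, Rmin a b <= c <= Rmax a b /\ F b - F a = F' c * (b - a).
Proof.
move=> H; case: (Rtotal_order a b) => [ab|[ab|ab]].
- have [c [Hc1 Hc2]] := @MVT_cor2 F F' a b ab (fun c hc => H c ltac:(rewrite Rmin_left ?Rmax_right; lra)).
  exists c; split => //; rewrite Rmin_left ?Rmax_right; lra.
- subst b; exists a; split; first by rewrite Rmin_left ?Rmax_right; lra.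
  ring.
- have [c [Hc1 Hc2]] := @MVT_cor2 F F' b a ab (fun c hc => H c ltac:(rewrite Rmin_right ?Rmax_left; lra)).
  exists c; split; first by rewrite Rmin_right ?Rmax_left; lra.
  lra.
Qed.

Lemma sm_dpl m (D : pt m -> Prop) f x i ds : smooth_on D f -> D x ->
  derivable_pt_lim (fun h => iter_partial ds f (upd x i h)) 0 (partial i (iter_partial ds f) x).
Proof.
move=> Hs Dx; have [_ H] := Hs ds x Dx; have [l Hl] := H i.
by rewrite /partial (D0_spec Hl).
Qed.

Lemma sm_cont m (D : pt m -> Prop) f x ds : smooth_on D f -> D x ->
  cont_at (iter_partial ds f) x.
Proof. by move=> Hs Dx; have [] := Hs ds x Dx. Qed.

Lemma dpl_at m (V : pt m -> Prop) G z a t : smooth_on V G -> V (upd z a t) ->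
  derivable_pt_lim (fun s => G (upd z a s)) t (partial a G (upd z a t)).
Proof.
move=> Hs Vz; apply: dpl_shift.
have := @sm_dpl _ _ G _ a [::] Hs Vz => /=.
have -> : (fun h => G (upd (upd z a t) a h)) = (fun h => G (upd z a (t + h))) => //.
by apply: functional_extensionality => h; rewrite upd_upd.
Qed.

Lemma tends0_ext F G : tends0 F -> (forall h, h <> 0 -> G h = F h) -> tends0 G.
Proof.
move=> H E eps e0; have [d [d0 Hd]] := H eps e0; exists d; split => // h hn hl.
rewrite E //; exact: Hd.
Qed.

Definition mixS p (x' : pt p) (y : pt p) (s : seq 'I_p) : pt p :=
  fun b => if b \in s then y b else x' b.

Lemma mixS_cons p (x' y : pt p) a s : a \notin s ->
  mixS x' y (a :: s) = upd (mixS x' y s) a (y a - x' a).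
Proof.
move=> as_; apply: functional_extensionality => b; rewrite /mixS /upd in_cons.
case: (eqVneq b a) => [->|ba] /=; last by [].
rewrite (negbTE as_); ring.
Qed.

Lemma chain_term p (V : pt p -> Prop) (G : pt p -> R) (y : R -> pt p) (ly : pt p) a s :
  is_open V -> smooth_on V G -> V (y 0) ->
  (forall b eps, 0 < eps -> exists d, 0 < d /\ forall h, Rabs h < d -> Rabs (y h b - y 0 b) < eps) ->
  (forall b, derivable_pt_lim (fun h => y h b) 0 (ly b)) ->
  a \notin s ->
  tends0 (fun h => (G (mixS (y 0) (y h) (a :: s)) - G (mixS (y 0) (y h) s)) / h
                   - partial a G (y 0) * ly a).
Proof.
set x' := y 0 => oV sG Vx cy dy as_ eps e0.
set P0 := partial a G x'.
set K := Rabs P0 + 1.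
set L := Rabs (ly a) + 1.
have K0 : 0 < K by rewrite /K; move: (Rabs_pos P0); lra.
have L0 : 0 < L by rewrite /L; move: (Rabs_pos (ly a)); lra.
set e1 := Rmin 1 (eps / (2 * L)).
have e10 : 0 < e1 by apply: Rmin_pos; [lra|apply: Rdiv_lt_0_compat; lra].
have [dc [dc0 Hc]] := @sm_cont _ _ G x' [:: a] sG Vx e1 e10.
have [dV [dV0 HV]] := oV x' Vx.
set r := Rmin dV dc.
have r0 : 0 < r by apply: Rmin_pos.
have [du [du0 Hu]] : exists d, 0 < d /\ forall b, forall h, Rabs h < d -> Rabs (y h b - x' b) < r.
  apply: (@finite_min _ (fun b d => forall h, Rabs h < d -> Rabs (y h b - x' b) < r)).
  - move=> b d d' [d'0 d'd] H h hh; apply: H; lra.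
  - by move=> b; exact: cy.
have e2 : 0 < eps / (2 * K) by apply: Rdiv_lt_0_compat; lra.
have [dd [dd0 Hd]] := (proj1 (dpl_tends0 (fun h => y h a) (ly a)) (dy a)) _ e2.
exists (Rmin du dd); split; first exact: Rmin_pos.
move=> h hn hl.
have hu : Rabs h < du by apply: Rlt_le_trans hl (Rmin_l _ _).
have hd : Rabs h < dd by apply: Rlt_le_trans hl (Rmin_r _ _).
set z := mixS x' (y h) s.
set D := y h a - x' a.
have close : forall t, Rmin 0 D <= t <= Rmax 0 D -> forall b, Rabs (upd z a t b - x' b) < r.
  move=> t ht b; rewrite /upd /z /mixS.
  case: (eqVneq b a) => [->|ba] /=.
  - rewrite (negbTE as_).
    have -> : x' a + t - x' a = t by ring.
    have hD := Hu a h hu; rewrite -/D in hD.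
    apply: Rle_lt_trans hD.
    move: ht; rewrite /Rmin /Rmax; destruct (Rle_dec 0 D);
      split_Rabs; lra.
  - case: (b \in s); first exact: Hu.
    by rewrite Rminus_diag Rabs_R0.
have inV : forall t, Rmin 0 D <= t <= Rmax 0 D -> V (upd z a t).
  move=> t ht; apply: HV => b; apply: Rlt_le_trans (close t ht b) (Rmin_l _ _).
have [c [hc hmvt]] := @mvt_any (fun t => G (upd z a t)) (fun t => partial a G (upd z a t)) 0 D
  (fun c hc => dpl_at sG (inV c hc)).
rewrite upd0 in hmvt.
rewrite (mixS_cons _ _ as_) -/z -/D hmvt.
set P := partial a G (upd z a c).
have hP : Rabs (P - P0) < e1.
  apply: Hc => b; apply: Rlt_le_trans (close c hc b) (Rmin_r _ _).
have hP1 : Rabs P < K.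
  rewrite /K; move: (Rabs_triang_inv P P0) (Rmin_l 1 (eps / (2 * L))); rewrite -/e1; lra.
have hq := Hd h hn hd; rewrite -/x' -/D in hq.
have -> : P * (D - 0) / h - P0 * ly a = P * (D / h - ly a) + (P - P0) * ly a.
  rewrite /Rdiv; ring.
set q := D / h - ly a.
apply: Rle_lt_trans (Rabs_triang _ _) _.
rewrite !Rabs_mult.
have t1 : Rabs P * Rabs q <= K * Rabs q.
  apply: Rmult_le_compat_r; [exact: Rabs_pos|lra].
have t2 : K * Rabs q < K * (eps / (2 * K)) by apply: Rmult_lt_compat_l.
have t3 : K * (eps / (2 * K)) = eps / 2 by field; lra.
have t4 : Rabs (P - P0) * Rabs (ly a) <= e1 * Rabs (ly a).
  apply: Rmult_le_compat_r; [exact: Rabs_pos|lra].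
have t5 : e1 * Rabs (ly a) <= eps / (2 * L) * Rabs (ly a).
  apply: Rmult_le_compat_r; [exact: Rabs_pos|exact: Rmin_r].
have t6 : eps / (2 * L) * Rabs (ly a) < eps / 2.
  have hlL : Rabs (ly a) < L by rewrite /L; lra.
  have hh := Rmult_lt_compat_l (eps / (2 * L)) _ _ ltac:(apply: Rdiv_lt_0_compat; lra) hlL.
  have : eps / (2 * L) * L = eps / 2 by field; lra.
  lra.
lra.
Qed.

Lemma chain_rule p (V : pt p -> Prop) (G : pt p -> R) (y : R -> pt p) (ly : pt p) :
  is_open V -> smooth_on V G -> V (y 0) ->
  (forall b eps, 0 < eps -> exists d, 0 < d /\ forall h, Rabs h < d -> Rabs (y h b - y 0 b) < eps) ->
  (forall b, derivable_pt_lim (fun h => y h b) 0 (ly b)) ->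
  derivable_pt_lim (fun h => G (y h)) 0 (sumI (fun a => partial a G (y 0) * ly a)).
Proof.
move=> oV sG Vx cy dy.
suff H : forall s, uniq s -> tends0 (fun h => (G (mixS (y 0) (y h) s) - G (y 0)) / h
           - sumS s (fun a => partial a G (y 0) * ly a)).
  apply/dpl_tends0; apply: (tends0_ext (H _ (enum_uniq 'I_p))) => h _.
  have -> : mixS (y 0) (y h) (enum 'I_p) = y h.
    by apply: functional_extensionality => b; rewrite /mixS mem_enum.
  by [].
elim => [|a s IH] /=.
- move=> _ eps e0; exists 1; split => [|h hn _]; first lra.
  have -> : mixS (y 0) (y h) [::] = y 0 by apply: functional_extensionality.
  rewrite sumS_nil; have -> : (G (y 0) - G (y 0)) / h - 0 = 0 by rewrite /Rdiv; ring.
  by rewrite Rabs_R0.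
- move=> /andP [as_ us].
  apply: (tends0_ext (tends0_add (chain_term oV sG Vx cy dy as_) (IH us))) => h _.
  rewrite sumS_cons /Rdiv; set S1 := sumS _ _; set M := G (mixS _ _ (a :: s)); ring.
Qed.

Lemma cont_local m (D : pt m -> Prop) (f g : pt m -> R) x :
  is_open D -> D x -> (forall y, D y -> f y = g y) -> cont_at g x -> cont_at f x.
Proof.
move=> oD Dx E cg eps e0; have [d1 [d10 H1]] := cg eps e0; have [d2 [d20 H2]] := oD x Dx.
exists (Rmin d1 d2); split; first exact: Rmin_pos.
move=> y hy; rewrite !E //.
- apply: H1 => i; exact: Rlt_le_trans (hy i) (Rmin_l _ _).
- apply: H2 => i; exact: Rlt_le_trans (hy i) (Rmin_r _ _).
Qed.

Lemma closure_sm m (D : pt m -> Prop) (C : (pt m -> R) -> Prop) :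
  is_open D ->
  (forall f, C f -> forall x, D x -> cont_at f x /\
      forall i, derivable_pt_lim (fun h => f (upd x i h)) 0 (partial i f x)) ->
  (forall f i, C f -> exists g, C g /\ forall x, D x -> partial i f x = g x) ->
  forall f, C f -> smooth_on D f.
Proof.
move=> oD H1 H2.
have key : forall ds f, C f -> exists g, C g /\ forall x, D x -> iter_partial ds f x = g x.
  elim => [|i ds IH] f Cf; first by exists f.
  have [g [Cg Eg]] := IH f Cf; have [g' [Cg' Eg']] := H2 g i Cg.
  exists g'; split => // x Dx /=; rewrite -Eg' //; by apply: (@partial_local _ D).
move=> f Cf ds x Dx; have [g [Cg E]] := key ds f Cf; have [cg dg] := H1 g Cg x Dx.
split; first exact: (cont_local oD Dx E).
move=> i; exists (partial i g x); apply: dpl_local (dg i).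
have [d [d0 Hd]] := open_upd i oD Dx; exists d; split => // h /Hd; move=> hh; by rewrite E.
Qed.

Lemma smooth_partial m (D : pt m -> Prop) f i : smooth_on D f -> smooth_on D (partial i f).
Proof.
move=> Hs ds x Dx.
have -> : iter_partial ds (partial i f) = iter_partial (ds ++ [:: i]) f by rewrite iter_cat.
exact: Hs.
Qed.

Lemma partial_const m (c : R) (i : 'I_m) : partial i (fun _ => c) = fun _ => 0.
Proof.
apply: functional_extensionality => x; rewrite /partial; apply: D0_spec.
exact: derivable_pt_lim_const.
Qed.

Lemma iter_const m (c : R) (ds : seq 'I_m) : exists c', iter_partial ds (fun _ => c) = fun _ => c'.
Proof. elim: ds => [|i ds [c' IH]] /=; first by exists c. by rewrite IH partial_const; exists 0. Qed.

Lemma smooth_const m (D : pt m -> Prop) c : smooth_on D (fun _ => c).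
Proof.
move=> ds x Dx; have [c' ->] := iter_const c ds; split.
- by move=> eps e0; exists 1; split => [|y _]; [lra|rewrite Rminus_diag Rabs_R0].
- move=> i; exists 0; exact: derivable_pt_lim_const.
Qed.

Lemma cont_add m (f g : pt m -> R) x : cont_at f x -> cont_at g x -> cont_at (fun z => f z + g z) x.
Proof.
move=> cf cg eps e0.
have e2 : 0 < eps / 2 by lra.
have [d1 [d10 H1]] := cf _ e2; have [d2 [d20 H2]] := cg _ e2.
exists (Rmin d1 d2); split; first exact: Rmin_pos.
move=> y hy.
have := H1 y (fun i => Rlt_le_trans _ _ _ (hy i) (Rmin_l _ _)).
have := H2 y (fun i => Rlt_le_trans _ _ _ (hy i) (Rmin_r _ _)).
move=> a b; have -> : f y + g y - (f x + g x) = (f y - f x) + (g y - g x) by ring.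
move: (Rabs_triang (f y - f x) (g y - g x)); lra.
Qed.

Lemma cont_mul m (f g : pt m -> R) x : cont_at f x -> cont_at g x -> cont_at (fun z => f z * g z) x.
Proof.
move=> cf cg eps e0.
set A := Rabs (g x) + 1. set B := Rabs (f x) + 1.
have A0 : 0 < A by rewrite /A; move: (Rabs_pos (g x)); lra.
have B0 : 0 < B by rewrite /B; move: (Rabs_pos (f x)); lra.
have e1 : 0 < eps / (2 * A) by apply: Rdiv_lt_0_compat; lra.
have e2 : 0 < Rmin 1 (eps / (2 * B)) by apply: Rmin_pos; [lra|apply: Rdiv_lt_0_compat; lra].
have [d1 [d10 H1]] := cf _ e1; have [d2 [d20 H2]] := cg _ e2.
exists (Rmin d1 d2); split; first exact: Rmin_pos.
move=> y hy.
have a := H1 y (fun i => Rlt_le_trans _ _ _ (hy i) (Rmin_l _ _)).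
have b := H2 y (fun i => Rlt_le_trans _ _ _ (hy i) (Rmin_r _ _)).
have -> : f y * g y - f x * g x = (f y - f x) * g y + f x * (g y - g x) by ring.
apply: Rle_lt_trans (Rabs_triang _ _) _; rewrite !Rabs_mult.
have b1 := Rmin_l 1 (eps / (2 * B)); have b2 := Rmin_r 1 (eps / (2 * B)).
have gy : Rabs (g y) <= A.
  rewrite /A; move: (Rabs_triang_inv (g y) (g x)); lra.
have t1a : Rabs (f y - f x) * Rabs (g y) <= Rabs (f y - f x) * A.
  apply: Rmult_le_compat_l => //; exact: Rabs_pos.
have t1b : Rabs (f y - f x) * A < eps / (2 * A) * A by apply: Rmult_lt_compat_r.
have t2 : Rabs (f x) * Rabs (g y - g x) <= B * (eps / (2 * B)).
  apply: Rmult_le_compat; try exact: Rabs_pos. all: try lra. rewrite /B; lra.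
have t1' : eps / (2 * A) * A = eps / 2 by field; lra.
have t2' : B * (eps / (2 * B)) = eps / 2 by field; lra.
lra.
Qed.

Lemma cont_comp m p (G : pt p -> R) (u : pt m -> pt p) x :
  cont_at G (u x) -> (forall b, cont_at (fun z => u z b) x) -> cont_at (fun z => G (u z)) x.
Proof.
move=> cG cu eps e0; have [dG [dG0 HG]] := cG eps e0.
have [d [d0 Hd]] := @finite_min _ (fun b d => forall y, (forall i, Rabs (y i - x i) < d) ->
   Rabs (u y b - u x b) < dG)
  (fun b d d' hd H y hy => H y (fun i => Rlt_le_trans _ _ _ (hy i) (proj2 hd)))
  (fun b => cu b dG dG0).
exists d; split => // y hy; apply: HG => b; exact: Hd.
Qed.

Lemma upd_close m (x : pt m) i h k : Rabs (upd x i h k - x k) <= Rabs h.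
Proof.
rewrite /upd; case: (k == i).
- have -> : x k + h - x k = h by ring.
  exact: Rle_refl.
- rewrite Rminus_diag Rabs_R0; exact: Rabs_pos.
Qed.

Inductive Cl m p (D : pt m -> Prop) (V : pt p -> Prop) (u : pt m -> pt p) :
   (pt m -> R) -> Prop :=
| Cl_sm f : smooth_on D f -> Cl D V u f
| Cl_comp G : smooth_on V G -> Cl D V u (fun z => G (u z))
| Cl_add f g : Cl D V u f -> Cl D V u g -> Cl D V u (fun z => f z + g z)
| Cl_mul f g : Cl D V u f -> Cl D V u g -> Cl D V u (fun z => f z * g z).

Lemma Cl_sumS m p D V (u : pt m -> pt p) T (s : seq T) (F : T -> pt m -> R) :
  (forall a, Cl D V u (F a)) -> Cl D V u (fun z => sumS s (fun a => F a z)).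
Proof.
move=> H; elim: s => [|a s IH].
- apply: Cl_sm; exact: smooth_const.
- exact: (Cl_add (H a) IH).
Qed.

Lemma Cl_props m p (D : pt m -> Prop) (V : pt p -> Prop) u f :
  is_open D -> is_open V -> smooth_vec D u -> (forall z, D z -> V (u z)) ->
  Cl D V u f ->
  (forall x, D x -> cont_at f x /\
      forall i, derivable_pt_lim (fun h => f (upd x i h)) 0 (partial i f x)) /\
  (forall i, exists g, Cl D V u g /\ forall x, D x -> partial i f x = g x).
Proof.
move=> oD oV su uV; elim => {f}.
- move=> f sf; split.
  + move=> x Dx; split; first exact: (@sm_cont _ _ _ _ [::] sf Dx).
    move=> i; exact: (@sm_dpl _ _ _ _ _ [::] sf Dx).
  + move=> i; exists (partial i f); split => //; apply: Cl_sm; exact: smooth_partial.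
- move=> G sG.
  have key : forall x i, D x -> derivable_pt_lim (fun h => G (u (upd x i h))) 0
     (sumI (fun a => partial a G (u x) * partial i (fun z => u z a) x)).
    move=> x i Dx.
    have := @chain_rule p V G (fun h => u (upd x i h)) (fun a => partial i (fun z => u z a) x)
      oV sG; rewrite upd0; apply.
    * exact: uV.
    * move=> b eps e0; have [d [d0 Hd]] := @sm_cont _ _ _ _ [::] (su b) Dx eps e0.
      exists d; split => // h hh; apply: Hd => k; apply: Rle_lt_trans (upd_close x i h k) hh.
    * move=> b; exact: (@sm_dpl _ _ _ _ _ [::] (su b) Dx).
  split.
  + move=> x Dx; split.
    * apply: cont_comp; first exact: (@sm_cont _ _ _ _ [::] sG (uV x Dx)).
      move=> b; exact: (@sm_cont _ _ _ _ [::] (su b) Dx).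
    * move=> i; have -> : partial i (fun z => G (u z)) x = sumI (fun a => partial a G (u x) * partial i (fun z => u z a) x) by rewrite /partial; apply: D0_spec; exact: key.
      exact: key.
  + move=> i; exists (fun z => sumI (fun a => partial a G (u z) * partial i (fun z => u z a) z)).
    split.
    * apply: Cl_sumS => a; apply: Cl_mul.
      -- apply: Cl_comp; exact: smooth_partial.
      -- apply: Cl_sm; apply: smooth_partial; exact: su.
    * move=> x Dx; rewrite /partial; apply: D0_spec; exact: key.
- move=> f g _ [Hf Pf] _ [Hg Pg]; split.
  + move=> x Dx; have [cf df] := Hf x Dx; have [cg dg] := Hg x Dx; split.
    * exact: cont_add.
    * move=> i; have := derivable_pt_lim_plus _ _ _ _ _ (df i) (dg i).
      rewrite {3}/partial => H; by rewrite (D0_spec H).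
  + move=> i; have [g1 [C1 E1]] := Pf i; have [g2 [C2 E2]] := Pg i.
    exists (fun z => g1 z + g2 z); split; first exact: Cl_add.
    move=> x Dx; have [_ df] := Hf x Dx; have [_ dg] := Hg x Dx.
    rewrite -E1 // -E2 //; rewrite {1}/partial; apply: D0_spec.
    exact: derivable_pt_lim_plus.
- move=> f g Cf [Hf Pf] Cg [Hg Pg]; split.
  + move=> x Dx; have [cf df] := Hf x Dx; have [cg dg] := Hg x Dx; split.
    * exact: cont_mul.
    * move=> i; have := derivable_pt_lim_mult _ _ _ _ _ (df i) (dg i).
      rewrite {3}/partial => H; by rewrite (D0_spec H).
  + move=> i; have [g1 [C1 E1]] := Pf i; have [g2 [C2 E2]] := Pg i.
    exists (fun z => g1 z * g z + f z * g2 z); split.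
    * apply: Cl_add; apply: Cl_mul => //.
    * move=> x Dx; have [_ df] := Hf x Dx; have [_ dg] := Hg x Dx.
      rewrite -E1 // -E2 //; rewrite {1}/partial; apply: D0_spec.
      have := derivable_pt_lim_mult _ _ _ _ _ (df i) (dg i).
      by rewrite /= upd0.
Qed.

Lemma Cl_smooth m p (D : pt m -> Prop) (V : pt p -> Prop) u f :
  is_open D -> is_open V -> smooth_vec D u -> (forall z, D z -> V (u z)) ->
  Cl D V u f -> smooth_on D f.
Proof.
move=> oD oV su uV; apply: (closure_sm (C := Cl D V u)) => //.
- by move=> g Cg; have [] := Cl_props oD oV su uV Cg.
- by move=> g i Cg; have [_ ] := Cl_props oD oV su uV Cg; apply.
Qed.

Definition u00 m : pt m -> pt 0 := fun _ _ => 0.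

Lemma open_True p : is_open (fun _ : pt p => True).
Proof. by move=> x _; exists 1; split => //; lra. Qed.

Lemma smooth_Cl m (D : pt m -> Prop) f : is_open D ->
  Cl D (fun _ : pt 0 => True) (@u00 m) f -> smooth_on D f.
Proof.
move=> oD; apply: Cl_smooth => //; first exact: open_True.
by move=> [].
Qed.

Lemma smooth_add m (D : pt m -> Prop) f g : is_open D -> smooth_on D f -> smooth_on D g ->
  smooth_on D (fun z => f z + g z).
Proof. move=> oD sf sg; apply: smooth_Cl => //; apply: Cl_add; exact: Cl_sm. Qed.

Lemma smooth_mul m (D : pt m -> Prop) f g : is_open D -> smooth_on D f -> smooth_on D g ->
  smooth_on D (fun z => f z * g z).
Proof. move=> oD sf sg; apply: smooth_Cl => //; apply: Cl_mul; exact: Cl_sm. Qed.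

Lemma smooth_sumS m (D : pt m -> Prop) T (s : seq T) F : is_open D ->
  (forall a, smooth_on D (F a)) -> smooth_on D (fun z => sumS s (fun a => F a z)).
Proof. move=> oD H; apply: smooth_Cl => //; apply: Cl_sumS => a; exact: Cl_sm. Qed.

Lemma iter_add m (D : pt m -> Prop) f g ds x : is_open D -> smooth_on D f -> smooth_on D g ->
  D x -> iter_partial ds (fun z => f z + g z) x = iter_partial ds f x + iter_partial ds g x.
Proof.
move=> oD sf sg; elim: ds x => [|i ds IH] x Dx //=.
rewrite (@partial_local _ D _ _ _ _ oD Dx IH).
rewrite {1}/partial; apply: D0_spec.
apply: (derivable_pt_lim_plus (fun h => iter_partial ds f (upd x i h)) (fun h => iter_partial ds g (upd x i h))); [exact: (sm_dpl _ _ sf Dx)|exact: (sm_dpl _ _ sg Dx)].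
Qed.

Lemma iter_scal m (D : pt m -> Prop) c f ds x : is_open D -> smooth_on D f ->
  D x -> iter_partial ds (fun z => c * f z) x = c * iter_partial ds f x.
Proof.
move=> oD sf; elim: ds x => [|i ds IH] x Dx //=.
rewrite (@partial_local _ D _ _ _ _ oD Dx IH).
rewrite {1}/partial; apply: D0_spec.
apply: (derivable_pt_lim_scal (fun h => iter_partial ds f (upd x i h))); exact: (sm_dpl _ _ sf Dx).
Qed.

Lemma iter_zero0 m (ds : seq 'I_m) : iter_partial ds (fun _ => 0) = fun _ => 0.
Proof. elim: ds => //= i ds ->; exact: partial_const. Qed.

Lemma iter_sumS m (D : pt m -> Prop) T (s : seq T) F ds x : is_open D ->
  (forall a, smooth_on D (F a)) -> D x ->
  iter_partial ds (fun z => sumS s (fun a => F a z)) x = sumS s (fun a => iter_partial ds (F a) x).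
Proof.
move=> oD sF Dx; elim: s => [|a s IH].
- have -> : (fun z => sumS [::] (fun a => F a z)) = fun _ => 0 by [].
  by rewrite iter_zero0 sumS_nil.
- rewrite sumS_cons (@iter_add _ D) //; first by rewrite IH.
  exact: smooth_sumS.
Qed.


Lemma iter_zero m (D : pt m -> Prop) f ds x : is_open D -> (forall y, D y -> f y = 0) ->
  D x -> iter_partial ds f x = 0.
Proof.
move=> oD H Dx; rewrite (@iter_local _ D f (fun _ => 0)) //; by rewrite iter_zero0.
Qed.

Lemma sumS_cat T (s t : seq T) f : sumS (s ++ t) f = sumS s f + sumS t f.
Proof. elim: s => [|x s IH] /=; rewrite ?sumS_nil; first ring. rewrite !sumS_cons IH; ring. Qed.

Lemma sumS_map T U (g : T -> U) (s : seq T) f : sumS (map g s) f = sumS s (fun x => f (g x)).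
Proof. by elim: s => //= x s IH; rewrite !sumS_cons IH. Qed.

Lemma dpl_sumS T (s : seq T) (F : T -> R -> R) l :
  (forall a, derivable_pt_lim (F a) 0 (l a)) ->
  derivable_pt_lim (fun h => sumS s (fun a => F a h)) 0 (sumS s l).
Proof.
move=> H; elim: s => [|a s IH].
- exact: derivable_pt_lim_const.
- exact: (derivable_pt_lim_plus _ _ _ _ _ (H a) IH).
Qed.

Lemma leibniz m (D : pt m -> Prop) (P g : pt m -> R) : is_open D ->
  smooth_on D P -> smooth_on D g -> forall ds,
  exists L : seq (seq 'I_m * seq 'I_m), (forall e, e \in L -> (size e.2 < size ds)%N) /\
   forall x, D x -> iter_partial ds (fun z => P z * g z) x =
     P x * iter_partial ds g x + sumS L (fun e => iter_partial e.1 P x * iter_partial e.2 g x).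
Proof.
move=> oD sP sg; elim => [|i ds [L [HL E]]].
- by exists [::]; split => // x Dx /=; rewrite sumS_nil Rplus_0_r.
- exists (([:: i], ds) :: map (fun e => (i :: e.1, e.2)) L ++ map (fun e => (e.1, i :: e.2)) L).
  split.
  + move=> e; rewrite in_cons mem_cat => /orP [/eqP -> //|/orP [] /mapP [e' he' ->] /=].
    * by have := HL e' he'; rewrite ltnS => /ltnW.
    * by have := HL e' he'.
  + move=> x Dx /=.
    rewrite (@partial_local _ D _ _ _ _ oD Dx E).
    rewrite sumS_cons sumS_cat !sumS_map /=.
    rewrite {1}/partial; apply: D0_spec.
    have -> : P x * partial i (iter_partial ds g) x + (partial i P x * iter_partial ds g x +
      (sumS L (fun e => partial i (iter_partial e.1 P) x * iter_partial e.2 g x) +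
       sumS L (fun e => iter_partial e.1 P x * partial i (iter_partial e.2 g) x))) =
      (partial i P x * iter_partial ds g x + P x * partial i (iter_partial ds g) x) +
      sumS L (fun e => partial i (iter_partial e.1 P) x * iter_partial e.2 g x +
        iter_partial e.1 P x * partial i (iter_partial e.2 g) x).
      by rewrite sumS_add; ring.
    apply: (derivable_pt_lim_plus (fun h => P (upd x i h) * iter_partial ds g (upd x i h))).
    + have := derivable_pt_lim_mult _ _ _ _ _ (@sm_dpl _ _ _ x i [::] sP Dx)
               (@sm_dpl _ _ _ x i ds sg Dx).
      by rewrite /= upd0.
    + apply: dpl_sumS => e.
      have := derivable_pt_lim_mult _ _ _ _ _ (@sm_dpl _ _ _ x i e.1 sP Dx)
               (@sm_dpl _ _ _ x i e.2 sg Dx).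
      by rewrite /= upd0.
Qed.

Lemma sumS_ext_in (T : eqType) (s : seq T) f g : (forall x, x \in s -> f x = g x) ->
  sumS s f = sumS s g.
Proof.
elim: s => // x s IH H; rewrite !sumS_cons H ?mem_head // IH // => y ys.
by apply: H; rewrite in_cons ys orbT.
Qed.

Lemma leibniz_at m (D : pt m -> Prop) (P g : pt m -> R) k z0 ds : is_open D ->
  smooth_on D P -> smooth_on D g -> D z0 ->
  (forall es, (size es < k)%N -> iter_partial es g z0 = 0) -> (size ds <= k)%N ->
  iter_partial ds (fun z => P z * g z) z0 = P z0 * iter_partial ds g z0.
Proof.
move=> oD sP sg Dz0 Hg hk; have [L [HL E]] := leibniz oD sP sg ds.
rewrite E // (@sumS_ext_in _ _ _ (fun _ => 0)) ?sumS_0 ?Rplus_0_r //.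
move=> e he; rewrite Hg ?Rmult_0_r //.
exact: leq_trans (HL e he) hk.
Qed.

Lemma upd2_close m (x : pt m) a b s t k :
  Rabs (upd (upd x a s) b t k - x k) <= Rabs s + Rabs t.
Proof.
have h1 := upd_close (upd x a s) b t k; have h2 := upd_close x a s k.
have -> : upd (upd x a s) b t k - x k =
   (upd (upd x a s) b t k - upd x a s k) + (upd x a s k - x k) by ring.
move: (Rabs_triang (upd (upd x a s) b t k - upd x a s k) (upd x a s k - x k)); lra.
Qed.

Lemma mvt_bound a b c : Rmin a b <= c <= Rmax a b -> a = 0 -> Rabs c <= Rabs b.
Proof. move=> hc ha; subst a; move: hc; rewrite /Rmin /Rmax; destruct (Rle_dec 0 b); split_Rabs; lra. Qed.

Definition Dl m (F : pt m -> R) x i j h :=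
  F (upd (upd x j h) i h) - F (upd x i h) - F (upd x j h) + F x.

Lemma schwarz_aux m (D : pt m -> Prop) F x i j : is_open D -> smooth_on D F -> D x -> i != j ->
  forall eps, 0 < eps -> exists d, 0 < d /\ forall h, Rabs h < d ->
  Rabs (Dl F x i j h - h * h * partial j (partial i F) x) <= eps * (h * h).
Proof.
move=> oD sF Dx ij eps e0.
have [dc [dc0 Hc]] := @sm_cont _ _ _ _ [:: j; i] sF Dx eps e0.
have [dD [dD0 HD]] := oD x Dx.
exists (Rmin dc dD / 2); split; first by move: (Rmin_pos _ _ dc0 dD0); lra.
move=> h hh.
have hm1 := Rmin_l dc dD; have hm2 := Rmin_r dc dD.
have close : forall a b s t, Rabs s <= Rabs h -> Rabs t <= Rabs h -> forall k,
   Rabs (upd (upd x a s) b t k - x k) < Rmin dc dD.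
  move=> a b s t hs ht k; have := upd2_close x a b s t k; lra.
have inD : forall a b s t, Rabs s <= Rabs h -> Rabs t <= Rabs h -> D (upd (upd x a s) b t).
  move=> a b s t hs ht; apply: HD => k; have := close a b s t hs ht k; lra.
have inD1 : forall a s, Rabs s <= Rabs h -> D (upd x a s).
  move=> a s hs; rewrite -(upd0 (upd x a s) a); apply: inD => //; rewrite Rabs_R0; exact: Rabs_pos.
have [c [hc Hmvt]] := @mvt_any
  (fun s => F (upd (upd x j h) i s) - F (upd x i s))
  (fun s => partial i F (upd (upd x j h) i s) - partial i F (upd x i s)) 0 h
  (fun c hc => derivable_pt_lim_minus _ _ _ _ _
     (dpl_at sF (inD j i h c (Rle_refl _) (mvt_bound hc (erefl 0))))
     (dpl_at sF (inD1 i c (mvt_bound hc (erefl 0))))).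
have hc' := mvt_bound hc (erefl 0).
have [c' [hc2 Hmvt2]] := @mvt_any
  (fun t => partial i F (upd (upd x i c) j t))
  (fun t => partial j (partial i F) (upd (upd x i c) j t)) 0 h
  (fun c'' hc'' => dpl_at (smooth_partial i sF) (inD i j c c'' hc' (mvt_bound hc'' (erefl 0)))).
have hc2' := mvt_bound hc2 (erefl 0).
rewrite !upd0 in Hmvt Hmvt2.
rewrite -(upd_comm x c h ij) in Hmvt.
have -> : Dl F x i j h = h * h * partial j (partial i F) (upd (upd x i c) j c').
  rewrite /Dl.
  have -> : F (upd (upd x j h) i h) - F (upd x i h) - F (upd x j h) + F x =
     F (upd (upd x j h) i h) - F (upd x i h) - (F (upd x j h) - F x) by ring.
  rewrite Hmvt Hmvt2; ring.
have hA : Rabs (partial j (partial i F) (upd (upd x i c) j c') - partial j (partial i F) x) < eps.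
  apply: (Hc (upd (upd x i c) j c')) => k; have := close i j c c' hc' hc2' k; lra.
have -> : h * h * partial j (partial i F) (upd (upd x i c) j c') - h * h * partial j (partial i F) x
   = (h * h) * (partial j (partial i F) (upd (upd x i c) j c') - partial j (partial i F) x) by ring.
rewrite Rabs_mult (Rabs_pos_eq (h * h)); last by nra.
rewrite Rmult_comm; apply: Rmult_le_compat_r; [nra|lra].
Qed.

Lemma schwarz m (D : pt m -> Prop) F x i j : is_open D -> smooth_on D F -> D x ->
  partial i (partial j F) x = partial j (partial i F) x.
Proof.
move=> oD sF Dx; case: (eqVneq i j) => [->//|ij].
set A := partial j (partial i F) x; set B := partial i (partial j F) x.
apply: Rminus_diag_uniq_sym; apply: NNPP => hne.
have e0 : 0 < Rabs (A - B) / 4 by have := Rabs_pos_lt _ hne; lra.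
have [d1 [d10 H1]] := schwarz_aux oD sF Dx ij e0.
have ji : j != i by rewrite eq_sym.
have [d2 [d20 H2]] := schwarz_aux oD sF Dx ji e0.
pose h := Rmin d1 d2 / 2.
have h0 : 0 < h by rewrite /h; move: (Rmin_pos _ _ d10 d20); lra.
have hd1 : Rabs h < d1 by rewrite Rabs_pos_eq; [rewrite /h; move: (Rmin_l d1 d2) (Rmin_pos _ _ d10 d20); lra|lra].
have hd2 : Rabs h < d2 by rewrite Rabs_pos_eq; [rewrite /h; move: (Rmin_r d1 d2) (Rmin_pos _ _ d10 d20); lra|lra].
have := H1 h hd1; have := H2 h hd2.
have -> : Dl F x j i h = Dl F x i j h.
  by rewrite /Dl (upd_comm _ _ _ ij); ring.
rewrite -/A -/B => b1 b2.
have hh : 0 < h * h by nra.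
have : Rabs (h * h * A - h * h * B) <= 2 * (Rabs (A - B) / 4) * (h * h).
  have -> : h * h * A - h * h * B = (h * h * A - Dl F x i j h) + (Dl F x i j h - h * h * B) by ring.
  apply: Rle_trans (Rabs_triang _ _) _; rewrite Rabs_minus_sym in b2.
  lra.
have -> : h * h * A - h * h * B = (h * h) * (A - B) by ring.
rewrite Rabs_mult (Rabs_pos_eq (h * h)); last lra.
move=> hb; have : h * h * Rabs (A - B) <= h * h * (Rabs (A - B) / 2) by lra.
move=> /(Rmult_le_reg_l _ _ _ hh); have := Rabs_pos_lt _ hne; lra.
Qed.

Lemma smooth_iter m (D : pt m -> Prop) F ds : smooth_on D F -> smooth_on D (iter_partial ds F).
Proof. elim: ds => //= i ds IH sF; apply: smooth_partial; exact: IH. Qed.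

Lemma iter_swap m (D : pt m -> Prop) F a b d c x : is_open D -> smooth_on D F -> D x ->
  iter_partial (a ++ b :: d :: c) F x = iter_partial (a ++ d :: b :: c) F x.
Proof.
move=> oD sF Dx; rewrite !iter_cat /=; apply: (@iter_local _ D) => // y Dy.
apply: (schwarz b d oD _ Dy); exact: smooth_iter.
Qed.

Lemma iter_move m (D : pt m -> Prop) F a b c x : is_open D -> smooth_on D F -> D x ->
  iter_partial (a ++ b :: c) F x = iter_partial (a ++ c ++ [:: b]) F x.
Proof.
move=> oD sF Dx; elim: c a => [|d c IH] a //.
rewrite (iter_swap _ _ _ _ oD sF Dx).
have -> : a ++ d :: b :: c = (a ++ [:: d]) ++ b :: c by rewrite -catA.
by rewrite IH -catA.
Qed.

Fixpoint dmultT m p (T : seq 'I_m -> pt p) (vs : seq (pt m)) : pt p :=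
  match vs with
  | [::] => T [::]
  | v :: vs' => fun a => sumI (fun c => v c * dmultT (fun cs => T (c :: cs)) vs' a)
  end.

Lemma iter_vpartial_cat m p (ds es : seq 'I_m) (f : pt m -> pt p) :
  iter_vpartial (ds ++ es) f = iter_vpartial ds (iter_vpartial es f).
Proof. by elim: ds => //= i ds ->. Qed.

Lemma dmult_T m p (f : pt m -> pt p) vs z :
  dmult f vs z = dmultT (fun cs => iter_vpartial (rev cs) f z) vs.
Proof.
elim: vs f => [|v vs IH] f //=.
apply: functional_extensionality => a; rewrite !sumIE; apply: sumS_ext => c.
rewrite IH; congr (_ * dmultT _ _ _).
apply: functional_extensionality => cs.
by rewrite rev_cons -cats1 iter_vpartial_cat.
Qed.

Lemma dmultT_ext m p (T T' : seq 'I_m -> pt p) vs :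
  (forall cs, size cs = size vs -> T cs = T' cs) -> dmultT T vs = dmultT T' vs.
Proof.
elim: vs T T' => [|v vs IH] T T' H /=; first exact: H.
apply: functional_extensionality => a; rewrite !sumIE; apply: sumS_ext => c.
by rewrite (IH _ (fun cs => T' (c :: cs))) // => cs hs; apply: H; rewrite /= hs.
Qed.

Lemma dmultT_zero m p (T : seq 'I_m -> pt p) vs :
  (forall cs, size cs = size vs -> T cs = @zero_pt p) -> dmultT T vs = @zero_pt p.
Proof.
move=> H; rewrite (@dmultT_ext _ _ T (fun _ => @zero_pt p)) //.
elim: vs {H} => //= v vs IH; apply: functional_extensionality => a.
rewrite IH sumIE (@sumS_ext _ _ _ (fun _ => 0)) ?sumS_0 // => c; rewrite /zero_pt; ring.
Qed.

Definition ebas m (c : 'I_m) : pt m := fun b => if b == c then 1 else 0.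

Lemma dmultT_basis m p (T : seq 'I_m -> pt p) cs :
  dmultT T (map (@ebas m) cs) = T cs.
Proof.
elim: cs T => //= c cs IH T; apply: functional_extensionality => a.
rewrite -(sumI_delta1 c (fun c' => T (c' :: cs) a)) !sumIE; apply: sumS_ext => c'.
by rewrite IH.
Qed.

Lemma dmultT_lin m p q (al : 'I_q -> R) (T : 'I_q -> seq 'I_m -> pt p) vs a :
  dmultT (fun cs a => sumI (fun c => al c * T c cs a)) vs a =
  sumI (fun c => al c * dmultT (T c) vs a).
Proof.
elim: vs T a => [|v vs IH] T a //=.
rewrite !sumIE.
rewrite (@sumS_ext _ _ _ (fun d => sumS (enum 'I_q) (fun c => v d * (al c * dmultT (fun cs => T c (d :: cs)) vs a)))); last first.
  move=> d; rewrite (IH (fun c cs => T c (d :: cs))) sumIE -sumS_scal //.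
rewrite sumS_swap; apply: sumS_ext => c.
rewrite sumIE -sumS_scal; apply: sumS_ext => d; ring.
Qed.

Lemma dmultT_matvec m p (M : mat p) (T : seq 'I_m -> pt p) vs :
  dmultT (fun cs => matvec M (T cs)) vs = matvec M (dmultT T vs).
Proof.
elim: vs T => [|v vs IH] T //=.
apply: functional_extensionality => a.
rewrite /matvec !sumIE.
rewrite (@sumS_ext _ _ _ (fun d => sumS (enum 'I_p) (fun b => v d * (M a b * dmultT (fun cs => T (d :: cs)) vs b)))); last first.
  move=> d; rewrite (IH (fun cs => T (d :: cs))) /matvec sumIE -sumS_scal //.
rewrite sumS_swap; apply: sumS_ext => b.
rewrite sumIE -sumS_scal; apply: sumS_ext => d; ring.
Qed.

Lemma matvec_lin m p (M : mat p) (v : pt m) (X : 'I_m -> pt p) a :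
  matvec M (fun a => sumI (fun c => v c * X c a)) a = sumI (fun c => v c * matvec M (X c) a).
Proof.
rewrite /matvec !sumIE.
rewrite (@sumS_ext _ _ _ (fun b => sumS (enum 'I_m) (fun c => M a b * (v c * X c b)))); last first.
  by move=> b; rewrite sumIE sumS_scal.
rewrite sumS_swap; apply: sumS_ext => c; rewrite sumIE -sumS_scal; apply: sumS_ext => b; ring.
Qed.

Definition CondS m p (j0 : mat m) (J0 : mat p) (T : seq 'I_m -> pt p) i N :=
  forall pre b cs, size pre = i -> (size pre + size cs).+1 = N ->
    (fun a => sumI (fun c => j0 c b * T (pre ++ c :: cs) a)) = matvec J0 (T (pre ++ b :: cs)).

Lemma slot_lin m p (j0 : mat m) (J0 : mat p) i : forall (T : seq 'I_m -> pt p) vs,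
  (i < size vs)%N -> CondS j0 J0 T i (size vs) ->
  dmultT T (set_nth (@zero_pt m) vs i (matvec j0 (nth (@zero_pt m) vs i))) = matvec J0 (dmultT T vs).
Proof.
elim: i => [|i IH] T [|v vs] //= hi HC; apply: functional_extensionality => a.
- rewrite matvec_lin /matvec !sumIE.
  rewrite (@sumS_ext _ _ _ (fun c => sumS (enum 'I_m) (fun b => v b * (j0 c b * dmultT (fun cs => T (c :: cs)) vs a)))); last first.
    move=> c; rewrite sumIE -sumS_scalr; apply: sumS_ext => b; ring.
  rewrite sumS_swap; apply: sumS_ext => b.
  rewrite sumS_scal; congr (_ * _).
  have := dmultT_lin (fun c => j0 c b) (fun c cs => T (c :: cs)) vs a.
  rewrite sumIE => <-.
  rewrite (@dmultT_ext _ _ _ (fun cs => matvec J0 (T (b :: cs)))).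
  + by rewrite dmultT_matvec.
  + move=> cs hs; have := HC [::] b cs erefl; rewrite /= hs => /(_ erefl) <- //.
- rewrite matvec_lin !sumIE; apply: sumS_ext => c; congr (_ * _).
  rewrite IH //.
  move=> pre b cs hp hs.
  apply: (HC (c :: pre) b cs); first by rewrite /= hp.
  by rewrite -hs /= addSn.
Qed.

Lemma cplx_matvec p (M : mat p) x : is_cplx_str M -> matvec M (matvec M x) = fun a => - x a.
Proof.
move=> HM; apply: functional_extensionality => a.
rewrite /matvec !sumIE.
rewrite (@sumS_ext _ _ _ (fun b => sumS (enum 'I_p) (fun c => M a b * M b c * x c)));
  last by move=> b; rewrite sumIE -sumS_scal; apply: sumS_ext => c; ring.
rewrite sumS_swap.
rewrite (@sumS_ext _ _ _ (fun c => (if c == a then - x c else 0))).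
  by rewrite sumS_delta ?enum_uniq ?mem_enum.
move=> c; rewrite sumS_scalr.
have := HM a c; rewrite /matmul sumIE => ->; rewrite eq_sym; case: (c == a); ring.
Qed.

Lemma sumI_delta1r m d (X : 'I_m -> R) :
  sumI (fun c => X c * (if c == d then 1 else 0)) = X d.
Proof.
rewrite -(sumI_delta1 d X) !sumIE; apply: sumS_ext => c; ring.
Qed.

Lemma ivp_at m p ds (u : pt m -> pt p) z a :
  iter_vpartial ds u z a = iter_partial ds (fun y => u y a) z.
Proof. by have := f_equal (fun F => F z) (iter_vpartialE ds u a). Qed.

Unset Implicit Arguments.
Theorem lemma2p2 (n k : nat) (D : pt 2 -> Prop) (V : pt (2 * n)%N -> Prop)
  (j : pt 2 -> mat 2) (J : pt (2 * n)%N -> mat (2 * n)%N)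
  (u : pt 2 -> pt (2 * n)%N) (z0 : pt 2) :
  is_open D -> is_open V ->
  smooth_mat D j -> (forall z, D z -> is_cplx_str (j z)) ->
  smooth_mat V J -> (forall x, V x -> is_cplx_str (J x)) ->
  smooth_vec D u -> (forall z, D z -> V (u z)) ->
  (forall z v, D z -> matvec (J (u z)) (du u z v) = du u z (matvec (j z) v)) ->
  D z0 -> jet_vanish u z0 k ->
  (jet_vanish u z0 k.+1 <->
   forall vs : seq (pt 2), size vs = k.+1 ->
     sigma_jet J j u z0 k.+1 vs = @zero_pt (2 * n)%N).
Proof.
move=> oD oV sj jc sJ Jc su uV hol Dz0 jv.
set j0 := j z0; set J0 := J (u z0).
have cond : forall c es a, (size es < k)%N ->
    iter_partial es (partial c (fun y => u y a)) z0 = 0.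
  move=> c es a hs.
  have -> : iter_partial es (partial c (fun y => u y a)) = iter_partial (es ++ [:: c]) (fun y => u y a).
    by rewrite iter_cat.
  rewrite -ivp_at jv //; by rewrite size_cat /= addn1 hs.
have HH : forall ds c a, size ds = k ->
   sumI (fun b => j0 b c * iter_partial (ds ++ [:: b]) (fun y => u y a) z0) =
   sumI (fun a' => J0 a a' * iter_partial (ds ++ [:: c]) (fun y => u y a') z0).
  move=> ds c a hds.
  pose f := fun z => sumS (enum 'I_(2 * n)) (fun a' => J (u z) a a' * partial c (fun y => u y a') z).
  pose g := fun z => sumS (enum 'I_2) (fun b => j z b c * partial b (fun y => u y a) z).
  have sPJ : forall a', smooth_on D (fun z => J (u z) a a').
    move=> a'; apply: (Cl_smooth (V := V) (u := u)) => //.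
    apply: (@Cl_comp _ _ D V u (fun x => J x a a')); exact: sJ.
  have sf : smooth_on D f.
    apply: smooth_sumS => // a'; apply: smooth_mul => //; apply: smooth_partial; exact: su.
  have sg : smooth_on D g.
    apply: smooth_sumS => // b; apply: smooth_mul => //; last by apply: smooth_partial; exact: su.
  have E : forall z, D z -> f z + (-1) * g z = 0.
    move=> z Dz; have := f_equal (fun w => w a) (hol z (ebas c) Dz).
    have -> : du u z (ebas c) = fun a' => partial c (fun y => u y a') z.
      by apply: functional_extensionality => a'; rewrite /du sumI_delta1.
    have -> : matvec (j z) (ebas c) = fun b => j z b c.
      by apply: functional_extensionality => b; rewrite /matvec sumI_delta1r.
    rewrite /matvec /du /= => H; rewrite /f /g -!sumIE H. rewrite /vpartial; set S := sumI _; ring.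
  have := iter_zero ds oD E Dz0.
  rewrite (iter_add ds oD sf _ Dz0); last by apply: smooth_mul => //; exact: smooth_const.
  rewrite (iter_scal (-1) ds oD sg Dz0).
  rewrite (@iter_sumS _ D _ (enum 'I_(2*n)) (fun a' z => J (u z) a a' * partial c (fun y => u y a') z) ds z0 oD); last 2 first.
    by move=> a'; apply: smooth_mul => //; apply: smooth_partial; exact: su.
    by [].
  rewrite (@iter_sumS _ D _ (enum 'I_2) (fun b z => j z b c * partial b (fun y => u y a) z) ds z0 oD); last 2 first.
    move=> b; apply: smooth_mul => //; apply: smooth_partial; exact: su.
    by [].
  rewrite (@sumS_ext _ _ _ (fun a' => J0 a a' * iter_partial (ds ++ [:: c]) (fun y => u y a') z0)); last first.
    move=> a'; rewrite (@leibniz_at _ D _ _ k z0 ds oD) //.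
    + by rewrite iter_cat.
    + by apply: smooth_partial; exact: su.
    + move=> es hes; exact: cond.
    + by rewrite hds.
  rewrite (@sumS_ext _ _ _ (fun b => j0 b c * iter_partial (ds ++ [:: b]) (fun y => u y a) z0)); last first.
    move=> b; rewrite (@leibniz_at _ D _ _ k z0 ds oD) //.
    + by rewrite iter_cat.
    + by apply: smooth_partial; exact: su.
    + move=> es hes; exact: cond.
    + by rewrite hds.
  rewrite -!sumIE; set S1 := sumI (fun a0 : 'I_(2 * n) => _); set S2 := sumI (fun b : 'I_2 => _); lra.
pose T := fun cs => iter_vpartial (rev cs) u z0.
have HC : forall i, CondS j0 J0 T i k.+1.
  move=> i pre b cs hp hs; apply: functional_extensionality => a.
  have rv : forall c a, T (pre ++ c :: cs) a =
      iter_partial ((rev cs ++ rev pre) ++ [:: c]) (fun y => u y a) z0.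
    move=> c a'; rewrite /T ivp_at rev_cat rev_cons cat_rcons -catA.
    by rewrite (iter_move (rev cs) c (rev pre) oD (su a') Dz0).
  have hsz : size (rev cs ++ rev pre) = k.
    by rewrite size_cat !size_rev addnC; move: hs => [].
  have -> : sumI (fun c => j0 c b * T (pre ++ c :: cs) a) =
            sumI (fun c => j0 c b * iter_partial ((rev cs ++ rev pre) ++ [:: c]) (fun y => u y a) z0).
    by rewrite !sumIE; apply: sumS_ext => c; rewrite rv.
  rewrite (HH _ _ _ hsz) /matvec !sumIE; apply: sumS_ext => a'; by rewrite rv.
pose A := fun vs => dmult u vs z0.
have JJ := Jc _ (uV _ Dz0).
have Hhol : forall l, (l <= k.+1)%N -> forall vs, size vs = k.+1 ->
    hol_part j0 J0 l A vs = A vs.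
  elim => [|l IH] // hl vs hs /=.
  have hl' : (l <= k.+1)%N by apply: ltnW.
  have hsz : size (set_nth (@zero_pt 2) vs l (matvec j0 (nth (@zero_pt 2) vs l))) = k.+1.
    by rewrite size_set_nth hs; apply/maxn_idPr.
  rewrite /slot_proj (IH hl' vs hs) (IH hl' _ hsz).
  rewrite /A !dmult_T -/T.
  rewrite (@slot_lin _ _ j0 J0 l T vs); last by rewrite hs.
  - rewrite (cplx_matvec _ JJ); apply: functional_extensionality => a; field.
  - by rewrite hs.
split.
- move=> jv1 vs hs; rewrite /sigma_jet -/j0 -/J0 Hhol // /A dmult_T.
  apply: dmultT_zero => cs hcs; apply: jv1; rewrite size_rev hcs hs /=; by [].
- move=> Hs ds /andP [h0 h1].
  case: (leqP (size ds) k) => hk; first by apply: jv; rewrite h0 hk.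
  have hds : size ds = k.+1 by apply/eqP; rewrite eqn_leq h1 hk.
  have := Hs (map (@ebas 2) (rev ds)); rewrite size_map size_rev hds => /(_ erefl).
  rewrite /sigma_jet -/j0 -/J0 Hhol //; last by rewrite size_map size_rev hds.
  by rewrite /A dmult_T dmultT_basis revK.
Qed.
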